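(* Let $\mathbb{F}$ be a field of characteristic zero. Fix $K\in\mathbb{N}$ and $\mu\vdash 4K$. There exists an integer $M_K\geq 3K$ such that for every $n\geq M_K$ the following holds: if $T$ is a standard tableau of shape $\mu^{(n-3K)}$, $O\in\Omega_{n,n+K}$, and $P:=\mathrm{Sub}^T_{(x,y)}(P_O)$, then for every monomial $u$ occurring in $P$ there exists a polynomial $p(x)\in\mathbb{F}[x]$ such that $\mathrm{Coef}_{u^{(s)}}(P^{(s)})=p(s)\cdot s!$ for every $s\in\mathbb{Z}_{\geq 0}$.
   Context: $\mathbb{F}\langle Y\rangle$ is the free non-unitary associative algebra on $Y=\{y_1,y_2,\dots\}$; $\mathrm{Coef}_u(P)$ is the coefficient of the monomial $u$ in $P$. A standard tableau $T$ of shape $\nu\vdash m$ is the Young diagram of $\nu$ filled with $1,\dots,m$ increasing along rows and columns; $\mathrm{Sub}^T_{(x,y)}$ is the homomorphism $x_j\mapsto y_{i_j}$, $i_j$ the row of $T$ containing $j$. For $\nu=(\nu_1,\dots,\nu_r)$, $\nu^{(s)}=(\nu_1+s,\nu_2,\dots,\nu_r)$. $\Omega_{n,m}$ is the set of ordered partitions $O=\{A_1,\dots,A_n\}$ of $[m]$ into $n$ nonempty ordered lists (underlying sets disjoint with union $[m]$); $x_A=x_ax_b\cdots x_c$ for $A=[\![ab\cdots c]\!]$; $P_n(z_1,\dots,z_n)=\sum_{\sigma\in S_n}z_{\sigma(1)}\cdots z_{\sigma(n)}$, $P_O=P_n(x_{A_1},\dots,x_{A_n})$, so $P=P_n(m_1,\dots,m_n)$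 with $m_k=\mathrm{Sub}^T_{(x,y)}(x_{A_k})$, and $P^{(s)}:=P_{n+s}(m_1,\dots,m_n,y_1,\dots,y_1)$ ($s$ copies of $y_1$). For a monomial $u$, a submonomial is $v$ with $u=gvh$ for monomials $g,h$ (possibly empty); the central part $\mathrm{C}(u)$ is the longest submonomial of the form $y_1^r$ (leftmost one if several); writing $u=g\,\mathrm{C}(u)\,h$, $u^{(s)}:=g\,y_1^{s}\mathrm{C}(u)\,h$. *)

(* Defs.v *)
From mathcomp Require Import all_boot all_order all_algebra all_fingroup.
Set Implicit Arguments. Unset Strict Implicit. Unset Printing Implicit Defensive.
Import GRing.Theory.

(* A monomial of the free non-unitary algebra F<Y> is a word in the letters
   y_1, y_2, ...; the letter y_i is encoded by the natural number i. *)
Definition word := seq nat.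

(* An element of F<Y> that is a formal sum of monomials, each with
   coefficient 1, is represented by the list (multiset) of its monomials. *)
Definition Coef (F : pzRingType) (u : word) (P : seq word) : F :=
  (count (pred1 u) P)%:R.

(* P_n(z_1,...,z_n) = sum_{sigma in S_n} z_{sigma(1)} ... z_{sigma(n)},
   evaluated at monomials z_k := ws`_k. *)
Definition Psym (ws : seq word) : seq word :=
  let n := size ws in
  [seq flatten [seq nth [::] ws (val (sigma i)) | i <- enum 'I_n]
   | sigma : {perm 'I_n}].

Definition is_partition (nu : seq nat) : bool :=
  sorted geq nu && all (fun a => 0 < a) nu.

Definition shape_add (s : nat) (nu : seq nat) : seq nat :=
  match nu with
  | [::] => [:: s]
  | a :: r => (a + s) :: r
  end.

(* A standard tableau of shape nu |- m, given as its list of rows (top row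
   first): rows have lengths nu, the entries are exactly 1..m, rows increase
   strictly left to right, columns increase strictly top to bottom. *)
Definition is_std_tableau (nu : seq nat) (T : seq (seq nat)) : Prop :=
  [/\ map size T = nu,
      perm_eq (flatten T) (iota 1 (sumn nu)),
      all (fun r => sorted ltn r) T &
      forall i j, i.+1 < size T -> j < size (nth [::] T i.+1) ->
        nth 0 (nth [::] T i) j < nth 0 (nth [::] T i.+1) j].

Definition row_of (T : seq (seq nat)) (j : nat) : nat :=
  (find (fun r => j \in r) T).+1.

(* Sub^T_{(x,y)} on the monomial x_A, A = [[a b ... c]]. *)
Definition SubT (T : seq (seq nat)) (A : seq nat) : word := map (row_of T) A.

(* O in Omega_{n,m}: n nonempty ordered lists A_1..A_n, pairwise disjoint,
   each without repetition, with union [m] = {1..m}. *)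
Definition ordered_partition (n m : nat) (O : seq (seq nat)) : Prop :=
  [/\ size O = n, all (fun A => A != [::]) O & perm_eq (flatten O) (iota 1 m)].

Definition mons (T : seq (seq nat)) (O : seq (seq nat)) : seq word :=
  map (SubT T) O.

Definition runlen (u : word) (i : nat) : nat :=
  find (fun x => x != 1%N) (drop i u).

(* r such that C(u) = y_1^r. *)
Definition central_len (u : word) : nat :=
  \max_(i < size u) runlen u i.

Definition central_pos (u : word) : nat :=
  find (fun i => central_len u <= runlen u i) (iota 0 (size u)).

(* u^(s) = g y_1^s C(u) h where u = g C(u) h. *)
Definition ext (s : nat) (u : word) : word :=
  take (central_pos u) u ++ nseq s 1%N ++ drop (central_pos u) u.

(* Main.v *)
Require Import Defs.
From mathcomp Require Import all_boot all_order all_algebra all_fingroup.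
From mathcomp Require Import zify ring.
Set Implicit Arguments. Unset Strict Implicit. Unset Printing Implicit Defensive.
Import GRing.Theory.
Module Part0.
Local Open Scope ring_scope.

Section Polys.
Variable F : fieldType.
Hypothesis charF0 : [pchar F] =i pred0.

Lemma natf_neq0 n : (n.+1%:R : F) != 0.
Proof. by rewrite ((pcharf0P F).1 charF0). Qed.

Lemma fact_neq0 n : ((n`!)%:R : F) != 0.
Proof. have := fact_gt0 n; case: (n`!) => // k _; exact: natf_neq0. Qed.

Definition psum (d k : nat) : F := \sum_(i < k) (i%:R) ^+ d.

Lemma psum_S d k : psum d k.+1 = psum d k + (k%:R) ^+ d.
Proof. by rewrite /psum big_ord_recr. Qed.

Lemma pow_tele d k : (k%:R : F) ^+ d.+1 = \sum_(e < d.+1) psum e k *+ 'C(d.+1, e).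
Proof.
elim: k => [|k IH].
  by rewrite expr0n /= /psum; under eq_bigr do rewrite big_ord0 mul0rn; rewrite big1.
rewrite -addn1 natrD exprD1n big_ord_recr /= IH binn mulr1n.
rewrite [X in _ = X](eq_bigr (fun e : 'I_d.+1 => psum e k *+ 'C(d.+1, e) + (k%:R ^+ e) *+ 'C(d.+1, e))).
  by rewrite big_split /= addrC.
by move=> e _; rewrite addn1 psum_S mulrnDl.
Qed.

Lemma psum_poly_fam d : exists S : nat -> {poly F},
  forall e, (e <= d)%N -> forall k, (S e).[k%:R] = psum e k.
Proof.
elim: d => [|d [S HS]].
  exists (fun _ => 'X); case=> // _ k.
  by rewrite hornerX /psum; under eq_bigr do rewrite expr0; rewrite sumr_const card_ord.
pose Sd := (('X ^+ d.+2 - \sum_(e < d.+1) (S e *+ 'C(d.+2, e))) * (d.+2%:R^-1)%:P).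
exists (fun e => if e == d.+1 then Sd else S e) => e; rewrite leq_eqVlt.
case: eqP => [-> _ k|_ /= he k]; last exact: HS.
rewrite /Sd hornerM hornerC hornerD hornerN hornerXn horner_sum.
under eq_bigr => i _ do rewrite hornerMn (HS i (ltn_ord i)).
rewrite pow_tele big_ord_recr /=.
rewrite addrC addrK binSn -[psum _ _ *+ _]mulr_natr -mulrA mulfV ?mulr1 //.
exact: natf_neq0.
Qed.

Lemma psum_poly d : exists S : {poly F}, forall k, S.[k%:R] = psum d k.
Proof. by have [S HS] := psum_poly_fam d; exists (S d); apply: HS. Qed.

Lemma antidiff (Q : {poly F}) : exists S : {poly F},
  forall k : nat, S.[k.+1%:R] = S.[k%:R] + Q.[k%:R].
Proof.
have [Sf HS] := psum_poly_fam (size Q).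
exists (\sum_(d < size Q) Q`_d *: Sf d) => k.
rewrite !horner_sum horner_coef -big_split /=; apply: eq_bigr => d _.
by rewrite !hornerZ !HS ?(ltnW (ltn_ord d)) // psum_S mulrDr.
Qed.

Definition EP (f : nat -> F) (lo : nat) :=
  exists P : {poly F}, forall m, (lo < m)%N -> f m = P.[m%:R].

Lemma EP_ext f g lo : (forall m, (lo < m)%N -> f m = g m) -> EP g lo -> EP f lo.
Proof. by move=> H [P HP]; exists P => m hm; rewrite H // HP. Qed.

Lemma EP_mono f lo lo' : (lo <= lo')%N -> EP f lo -> EP f lo'.
Proof. by move=> hl [P HP]; exists P => m hm; apply: HP; apply: leq_ltn_trans hm. Qed.

Lemma EP_0 lo : EP (fun _ => 0) lo.
Proof. by exists 0 => m _; rewrite horner0. Qed.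

Lemma EP_add f g lo : EP f lo -> EP g lo -> EP (fun m => f m + g m) lo.
Proof.
by move=> [P HP] [Q HQ]; exists (P + Q) => m hm; rewrite hornerD HP ?HQ.
Qed.

Lemma EP_if (b : bool) f lo : EP f lo -> EP (fun m => if b then f m else 0) lo.
Proof. by case: b => // _; apply: EP_0. Qed.

Lemma EP_sum (T : eqType) (s : seq T) (f : T -> nat -> F) lo :
  (forall x, x \in s -> EP (f x) lo) -> EP (fun m => \sum_(x <- s) f x m) lo.
Proof.
elim: s => [|a s IH] H.
  by apply: EP_ext (EP_0 lo) => m _; rewrite big_nil.
apply: EP_ext (EP_add (H a (mem_head _ _)) (IH _)) => [m _|x xs].
  by rewrite big_cons.
by apply: H; rewrite in_cons xs orbT.
Qed.

Lemma EP_shift f lo k : EP f lo -> EP (fun m => f (m - k)%N) (lo + k).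
Proof.
move=> [P HP]; exists (P \Po ('X - (k%:R)%:P)) => m hm.
rewrite horner_comp hornerXsubC -natrB; last by lia.
by apply: HP; lia.
Qed.

Lemma EP_rec f Q lo : EP Q lo -> (forall m, (lo < m)%N -> f m = f m.-1 + Q m) ->
  EP f lo.
Proof.
move=> [Qp HQ] Hf.
have [S HS] := antidiff (Qp \Po ('X + 1)).
exists (S + (f lo - S.[lo%:R])%:P).
suff H : forall k, f (lo + k)%N = (S + (f lo - S.[lo%:R])%:P).[(lo + k)%N%:R].
  by move=> m hm; have := H (m - lo)%N; rewrite subnKC // ltnW.
elim=> [|k IH]; first by rewrite addn0 hornerD hornerC addrC subrK.
rewrite addnS Hf ?ltnS ?leq_addr //= IH HQ ?ltnS ?leq_addr //.
rewrite !hornerD !hornerC HS horner_comp hornerD hornerX hornerC -natr1.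
by rewrite addrAC.
Qed.

Lemma EP_mulc c f lo : EP f lo -> EP (fun m => c * f m) lo.
Proof. by move=> [P HP]; exists (c *: P) => m hm; rewrite hornerZ HP. Qed.

End Polys.

End Part0.
Import Part0.

Module Part1.

Fixpoint Cn (k : nat) (ms : seq word) (w : word) : nat :=
  if k is k'.+1 then
    (if ms is [::] then nat_of_bool (w == [::])
     else \sum_(x <- ms) (if take (size x) w == x then Cn k' (rem x ms) (drop (size x) w) else 0))
  else nat_of_bool (w == [::]).

Definition Cnt ms w := Cn (size ms) ms w.

Lemma Cnt_nil w : Cnt [::] w = (w == [::]).
Proof. by []. Qed.

Lemma CntE ms w : ms != [::] -> Cnt ms w =
  \sum_(x <- ms) (if take (size x) w == x then Cnt (rem x ms) (drop (size x) w) else 0).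
Proof.
case: ms => [//|a s] _; rewrite {1}/Cnt [Cn _ _ _]/=; apply: eq_big_seq => x xin.
by rewrite /Cnt size_rem.
Qed.

Lemma perm_rem' (T : eqType) (x : T) s t : perm_eq s t -> perm_eq (rem x s) (rem x t).
Proof.
move=> Hst; case: (boolP (x \in s)) => xs.
  have xt : x \in t by rewrite -(perm_mem Hst).
  rewrite -(perm_cons x); apply: (@perm_trans _ s); first by rewrite perm_sym perm_to_rem.
  by apply: perm_trans Hst _; apply: perm_to_rem.
have xt : x \notin t by rewrite -(perm_mem Hst).
by rewrite !rem_id.
Qed.

Lemma Cnt_perm ms ms' w : perm_eq ms ms' -> Cnt ms w = Cnt ms' w.
Proof.
move Hn: (size ms) => n; elim: n ms ms' w Hn => [|n IH] ms ms' w Hn H.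
  move/eqP: Hn; rewrite size_eq0 => /eqP Hm; subst ms.
  by move: (perm_size H) => /esym /eqP; rewrite size_eq0 => /eqP ->.
have ms0 : ms != [::] by rewrite -size_eq0 Hn.
have ms'0 : ms' != [::] by rewrite -size_eq0 -(perm_size H) Hn.
rewrite !CntE // (perm_big _ H); apply: eq_big_seq => x xin.
case: eqP => // _; apply: IH; last exact: perm_rem'.
by rewrite size_rem ?Hn // (perm_mem H).
Qed.

Lemma cat_eq (a b w : word) :
  (a ++ b == w) = (take (size a) w == a) && (b == drop (size a) w).
Proof.
apply/eqP/andP => [<-|[/eqP Ha /eqP ->]]; last by rewrite -{1}Ha cat_take_drop.
by rewrite take_size_cat // drop_size_cat.
Qed.

Lemma perm_rem_map (T1 T2 : eqType) (f : T1 -> T2) x I : x \in I ->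
  perm_eq (rem (f x) (map f I)) (map f (rem x I)).
Proof.
move=> xI; have H : perm_eq (map f I) (f x :: map f (rem x I)).
  by rewrite -map_cons; apply: perm_map; apply: perm_to_rem.
by have := perm_rem' (f x) H; rewrite /= eqxx.
Qed.

Lemma count_perms ws I w : uniq I ->
  count (fun p => flatten (map (nth [::] ws) p) == w) (permutations I)
  = Cnt (map (nth [::] ws) I) w.
Proof.
move Hn: (size I) => n; elim: n I w Hn => [|n IH] I w Hn uI.
  move/eqP: Hn; rewrite size_eq0 => /eqP ->.
  by rewrite /permutations /= eq_sym addn0.
have I0 : (0 < size I)%N by rewrite Hn.
rewrite (seq.permP (permutationsE I0)) undup_id // count_flatten.
rewrite CntE; last by rewrite -size_eq0 size_map Hn.
rewrite sumnE !big_map; apply: eq_big_seq => x xI.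
rewrite count_map.
rewrite (eq_count (a2 := fun t => (take (size (nth [::] ws x)) w == nth [::] ws x)
   && (flatten (map (nth [::] ws) t) == drop (size (nth [::] ws x)) w))); last first.
  by move=> t /=; rewrite cat_eq.
case: eqP => _; last by rewrite count_pred0.
rewrite (eq_count (a2 := fun t => flatten (map (nth [::] ws) t) == drop (size (nth [::] ws x)) w)) //.
rewrite IH ?size_rem ?Hn ?rem_uniq //.
by apply: Cnt_perm; rewrite perm_sym; apply: perm_rem_map.
Qed.

Lemma enum_perm_perms n :
  perm_eq (map (fun s : {perm 'I_n} => [seq val (s i) | i <- enum 'I_n]) (enum {perm 'I_n}))
          (permutations (iota 0 n)).
Proof.
apply: uniq_perm; last 1 first.
- move=> p; rewrite mem_permutations; apply/mapP/idP => [[s _ ->]|Hp].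
    rewrite -val_enum_ord (map_comp val s); apply: perm_map.
    apply: uniq_perm => [||y]; rewrite ?enum_uniq ?(map_inj_uniq perm_inj) //.
    - exact: enum_uniq.
    rewrite mem_enum; apply/mapP; exists (s^-1 y)%g; rewrite ?mem_enum //.
    by rewrite permKV.
  have szp : size p = n by rewrite (perm_size Hp) size_iota.
  have up : uniq p by rewrite (perm_uniq Hp) iota_uniq.
  have ltp : forall i : 'I_n, (nth 0 p i < n)%N.
    move=> i; have : nth 0 p i \in iota 0 n by rewrite -(perm_mem Hp) mem_nth // szp.
    by rewrite mem_iota.
  pose f := fun i : 'I_n => insubd i (nth 0 p i).
  have vf : forall i, val (f i) = nth 0 p i by move=> i; rewrite /f insubdK //; apply: ltp.
  have finj : injective f.
    move=> i j /(congr1 val); rewrite !vf => /eqP; rewrite nth_uniq ?szp //.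
    by move/eqP/val_inj.
  exists (perm finj); first by rewrite mem_enum.
  rewrite (eq_map (g := fun i => nth 0 p (val i))); last by move=> i; rewrite permE vf.
  by rewrite (map_comp (nth 0 p) val) val_enum_ord -szp -/(mkseq _ _) mkseq_nth.
- rewrite map_inj_uniq ?enum_uniq // => s t /eq_in_map H.
  by apply/permP => i; apply: val_inj; apply: H; rewrite mem_enum.
- exact: permutations_uniq.
Qed.

Lemma count_Psym ws w : count (pred1 w) (Psym ws) = Cnt ws w.
Proof.
rewrite /Psym.
set n := size ws.
have -> : [seq flatten [seq nth [::] ws (val (sigma i)) | i <- enum 'I_n] | sigma : {perm 'I_n}]
  = map (fun p => flatten (map (nth [::] ws) p))
      (map (fun s : {perm 'I_n} => [seq val (s i) | i <- enum 'I_n]) (enum {perm 'I_n})).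
  by rewrite -map_comp; apply: eq_map => s /=; rewrite -map_comp.
rewrite count_map (seq.permP (enum_perm_perms n)).
rewrite (eq_count (a2 := fun p => flatten (map (nth [::] ws) p) == w)) //.
by rewrite count_perms ?iota_uniq // -/(mkseq _ _) mkseq_nth.
Qed.

End Part1.
Import Part1.

Module Part2.

Definition Dsum (ms : seq word) := sumn (map size ms).

Lemma size_le_D x ms : x \in ms -> (size x <= Dsum ms)%N.
Proof.
elim: ms => //= y s IH; rewrite in_cons => /orP [/eqP ->|/IH]; first exact: leq_addr.
by move=> H; apply: leq_trans H (leq_addl _ _).
Qed.

Lemma Dsum_rem x ms : x \in ms -> Dsum (rem x ms) = (Dsum ms - size x)%N.
Proof.
move=> xin; have := perm_to_rem xin => /(perm_map size) /perm_sumn.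
by rewrite /Dsum => -> /=; rewrite addKn.
Qed.

Lemma rem_cat_l (T : eqType) (x : T) s l : x \in s -> rem x (s ++ l) = rem x s ++ l.
Proof.
elim: s => //= y s IH; rewrite in_cons; case: eqP => [->|ne] /=; first by rewrite eqxx.
by move=> xs; case: eqP => [e|_]; [case: ne | rewrite IH].
Qed.

Lemma Cnt_split ms j w : Cnt (ms ++ nseq j.+1 [:: 1%N]) w =
  (\sum_(x <- ms) (if take (size x) w == x then Cnt (rem x ms ++ nseq j.+1 [:: 1%N]) (drop (size x) w) else 0)
  + j.+1 * (if take 1 w == [:: 1%N] then Cnt (ms ++ nseq j [:: 1%N]) (drop 1 w) else 0))%N.
Proof.
rewrite CntE; last by case: ms.
rewrite big_cat; congr addn.
  by apply: eq_big_seq => x xin; rewrite rem_cat_l.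
rewrite big_nseq iter_addn_0 mulnC; congr (_ * _)%N; case: ifP => // _.
apply: Cnt_perm; apply: (@perm_trans _ (rem [:: 1%N] ([:: 1%N] :: (ms ++ nseq j [:: 1%N])))).
  apply: perm_rem'; change (nseq j.+1 [:: 1%N]) with ([:: [:: 1%N]] ++ nseq j [:: 1%N]).
  by rewrite perm_catCA.
by rewrite /= ?eqxx.
Qed.

Lemma take_w (g h : word) m k : (k <= size g + m)%N ->
  take k (g ++ nseq m 1%N ++ h) = if (k <= size g)%N then take k g else g ++ nseq (k - size g) 1%N.
Proof.
move=> hk; case: ifP => hg; first by rewrite takel_cat.
move/negbT: hg; rewrite -ltnNge => hg.
rewrite take_cat ltnNge (ltnW hg) /= take_cat size_nseq; case: ltnP => h2.
  by rewrite take_nseq // ltnW.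
have -> : (k - size g = m)%N by lia.
by rewrite subnn take0 cats0.
Qed.

Lemma drop_w (g h : word) m k : (k <= size g + m)%N ->
  drop k (g ++ nseq m 1%N ++ h) = if (k <= size g)%N then drop k g ++ nseq m 1%N ++ h
     else nseq (m - (k - size g)) 1%N ++ h.
Proof.
move=> hk; case: ifP => hg.
  rewrite drop_cat; case: ltnP => // h2; have -> : k = size g by lia.
  by rewrite subnn drop0 drop_size.
move/negbT: hg; rewrite -ltnNge => hg.
rewrite drop_cat ltnNge (ltnW hg) /= drop_cat size_nseq; case: ltnP => h2.
  by rewrite drop_nseq.
have -> : (k - size g = m)%N by lia.
by rewrite subnn drop0.
Qed.

Lemma take_w0 (h : word) m k : (k <= m)%N -> take k (nseq m 1%N ++ h) = nseq k 1%N.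
Proof.
move=> hk; have := @take_w [::] h m k hk; rewrite /= subn0 => ->.
by case: k {hk}.
Qed.

Lemma drop_w0 (h : word) m k : (k <= m)%N -> drop k (nseq m 1%N ++ h) = nseq (m - k) 1%N ++ h.
Proof.
move=> hk; have := @drop_w [::] h m k hk; rewrite /= subn0 => ->.
by case: k {hk} => //=; rewrite subn0.
Qed.

Local Open Scope ring_scope.

Section Core.
Variable F : fieldType.
Hypothesis charF0 : [pchar F] =i pred0.

Definition jj ms (g h : word) m := (size g + m + size h - Dsum ms)%N.
Definition Nf ms g h m : F :=
  (Cnt (ms ++ nseq (jj ms g h m) [:: 1%N]) (g ++ nseq m 1%N ++ h))%:R / ((jj ms g h m)`!)%:R.

Lemma NfI ms g h m (R : F) :
  (Cnt (ms ++ nseq (jj ms g h m) [:: 1%N]) (g ++ nseq m 1%N ++ h))%:R = ((jj ms g h m)`!)%:R * R ->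
  Nf ms g h m = R.
Proof. by rewrite /Nf => ->; rewrite mulrC mulKf // fact_neq0. Qed.

Lemma NfE ms g h m :
  (Cnt (ms ++ nseq (jj ms g h m) [:: 1%N]) (g ++ nseq m 1%N ++ h))%:R = ((jj ms g h m)`!)%:R * Nf ms g h m.
Proof. by rewrite /Nf mulrC divfK // fact_neq0. Qed.

Lemma EP_ite (b : bool) (f g : nat -> F) lo : EP f lo -> EP g lo ->
  EP (fun m => if b then f m else g m) lo.
Proof. by case: b. Qed.

Lemma core h : forall N ms g, (size ms + size g < N)%N -> EP (Nf ms g h) (Dsum ms).
Proof.
elim=> // N IH ms [|b g'] hN.
  apply: (EP_rec charF0 (Q := fun m => \sum_(x <- ms) (if x == nseq (size x) 1%N
       then Nf (rem x ms) [::] h (m - size x) else 0))).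
    apply: EP_sum => x xin; apply: EP_if.
    apply: (EP_mono _ (EP_shift (size x) (IH (rem x ms) [::] _))).
      by rewrite Dsum_rem // subnK // size_le_D.
      have ms0 : (0 < size ms)%N by case: (ms) xin.
      by rewrite size_rem //=; move: hN ms0 => /=; rewrite !addn0; case: (size ms).
  move=> m hm; apply: NfI.
  have [j' Hj] : exists j', jj ms [::] h m = j'.+1.
    by exists (jj ms [::] h m).-1; rewrite /jj /=; lia.
  rewrite Hj Cnt_split natrD natr_sum natrM.
  rewrite (eq_big_seq (fun x => (j'.+1)`!%:R * (if x == nseq (size x) 1%N
      then Nf (rem x ms) [::] h (m - size x) else 0))); last first.
    move=> x xin; have hx := size_le_D xin.
    have hxm : (size x <= m)%N := leq_trans hx (ltnW hm).
    rewrite take_w0 // drop_w0 //.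
    rewrite eq_sym; case: eqP => _; last by rewrite mulr0.
    have Hj2 : jj (rem x ms) [::] h (m - size x) = j'.+1.
      move: Hj hx hm; rewrite /jj Dsum_rem //=; move: (size x) (Dsum ms) => a b; lia.
    by have := NfE (rem x ms) [::] h (m - size x); rewrite Hj2 /= => ->.
  have h1m : (1 <= m)%N by apply: leq_ltn_trans hm.
  rewrite /= -mulr_sumr take_w0 // drop_w0 //.
  have Hj' : jj ms [::] h m.-1 = j' by move: Hj; rewrite /jj /=; lia.
  have := NfE ms [::] h m.-1; rewrite Hj' /= subn1 => ->.
  by rewrite factS natrM mulrDr addrC mulrA.
have ms_sz : forall x, x \in ms -> size (rem x ms) = (size ms).-1 by move=> x xin; rewrite size_rem.
apply: (@EP_ext _ _ (fun m => \sum_(x <- ms) (if (size x <= size (b :: g'))%N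
    then (if take (size x) (b :: g') == x then Nf (rem x ms) (drop (size x) (b :: g')) h m else 0)
    else (if x == (b :: g') ++ nseq (size x - size (b :: g')) 1%N
          then Nf (rem x ms) [::] h (m - (size x - size (b :: g'))) else 0))
   + (if b == 1%N then Nf ms g' h m else 0))); last first.
  apply: EP_add; last first.
    by apply: EP_if; apply: IH; move: hN => /=; rewrite addnS.
  apply: EP_sum => x xin; have hx := size_le_D xin.
  have ms0 : (0 < size ms)%N by case: (ms) xin.
  apply: EP_ite; apply: EP_if.
    apply: (EP_mono _ (IH (rem x ms) (drop (size x) (b :: g')) _)).
      by rewrite Dsum_rem // leq_subr.
    rewrite ms_sz // size_drop; move: hN ms0; move: (size ms) (size (b :: g')) (size x) => a c d.
    case: a => //= a; lia.
  apply: (EP_mono _ (EP_shift (size x - size (b :: g')) (IH (rem x ms) [::] _))).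
    rewrite Dsum_rem //; move: hx; move: (size x) (Dsum ms) (size (b :: g')) => a c d; lia.
  rewrite ms_sz //; move: hN ms0; move: (size ms) (size (b :: g')) => a c.
  case: a => //= a; lia.
move=> m hm; apply: NfI.
have [j' Hj] : exists j', jj ms (b :: g') h m = j'.+1.
  exists (jj ms (b :: g') h m).-1; rewrite /jj; move: hm.
  move: (size (b :: g')) (Dsum ms) (size h) => a c d; lia.
rewrite Hj Cnt_split natrD natr_sum natrM.
rewrite (eq_big_seq (fun x => (j'.+1)`!%:R * (if (size x <= size (b :: g'))%N
    then (if take (size x) (b :: g') == x then Nf (rem x ms) (drop (size x) (b :: g')) h m else 0)
    else (if x == (b :: g') ++ nseq (size x - size (b :: g')) 1%N
          then Nf (rem x ms) [::] h (m - (size x - size (b :: g'))) else 0)))); last first.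
  move=> x xin; have hx := size_le_D xin.
  have hxm : (size x <= size (b :: g') + m)%N.
    by apply: leq_trans (leq_trans hx (ltnW hm)) (leq_addl _ _).
  rewrite take_w // drop_w //; case hxg: (size x <= size (b :: g'))%N.
    case: eqP => _; last by rewrite mulr0.
    have Hj2 : jj (rem x ms) (drop (size x) (b :: g')) h m = j'.+1.
      move: Hj hx hxg; rewrite /jj Dsum_rem // size_drop.
      move: (size x) (Dsum ms) (size (b :: g')) => a c d; lia.
    by have := NfE (rem x ms) (drop (size x) (b :: g')) h m; rewrite Hj2 => ->.
  rewrite eq_sym; case: eqP => _; last by rewrite mulr0.
  have Hj2 : jj (rem x ms) [::] h (m - (size x - size (b :: g'))) = j'.+1.
    move: Hj hx hxg hm; rewrite /jj Dsum_rem //=.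
    move: (size x) (Dsum ms) (size g') => a c d; lia.
  by have := NfE (rem x ms) [::] h (m - (size x - size (b :: g'))); rewrite Hj2 /= => ->.
rewrite -mulr_sumr /= drop0 take0 eqseq_cons andbT.
case: eqP => _; last by rewrite mulr0 addr0 addr0.
have Hj' : jj ms g' h m = j'.
  by move: Hj; rewrite /jj /=; move: (size g') (Dsum ms) (size h) => a c d; lia.
have := NfE ms g' h m; rewrite Hj' => ->.
by rewrite factS natrM mulrDr mulrA.
Qed.

End Core.

End Part2.
Import Part2.

Module Part3.

Lemma mem_Psym_perm ws u : u \in Psym ws -> perm_eq u (flatten ws).
Proof.
rewrite /Psym; set n := size ws.
have -> : [seq flatten [seq nth [::] ws (val (sigma i)) | i <- enum 'I_n] | sigma : {perm 'I_n}]
  = map (fun p => flatten (map (nth [::] ws) p))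
      (map (fun s : {perm 'I_n} => [seq val (s i) | i <- enum 'I_n]) (enum {perm 'I_n})).
  by rewrite -map_comp; apply: eq_map => s /=; rewrite -map_comp.
case/mapP => p; rewrite (perm_mem (enum_perm_perms n)) mem_permutations => Hp ->.
apply: perm_flatten; rewrite -[X in perm_eq _ X](mkseq_nth [::] ws).
exact: perm_map.
Qed.

Definition p1 (a : nat) := a != 1%N.

Lemma runlen_bound u r : (forall i, (runlen u i <= r)%N) ->
  (size u <= runlen u 0 + count p1 u * r.+1)%N.
Proof.
elim: u => //= a u IH H.
have H' : forall i, (runlen u i <= r)%N by move=> i; have := H i.+1.
have := IH H'; rewrite /runlen !drop0 /=.
case: (a =P 1%N) => [->|ha] /= hu.
  by rewrite /p1 /= add0n addSn ltnS.
have := H' 0; rewrite /runlen drop0 => h0.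
have -> : p1 a by apply/eqP.
rewrite add0n mulSn addSn ltnS; apply: leq_trans hu _; rewrite leq_add2r; exact: h0.
Qed.

Lemma runlen_le_central u i : (runlen u i <= central_len u)%N.
Proof.
case: (ltnP i (size u)) => hi.
  by rewrite /central_len; apply: (leq_bigmax (Ordinal hi)).
by rewrite /runlen drop_oversize.
Qed.

Lemma take_find_ones (s : word) k : (k <= find p1 s)%N -> take k s = nseq k 1%N.
Proof.
elim: s k => [|a s IH] [|k] //=.
rewrite /p1; case: eqP => [->|] //= hk.
by rewrite IH.
Qed.

Lemma central_split u : (0 < central_len u)%N ->
  take (central_len u) (drop (central_pos u) u) = nseq (central_len u) 1%N /\
  (central_len u <= size (drop (central_pos u) u))%N.
Proof.
move=> hL.
have hs : (0 < size u)%N.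
  by case: u hL => //; rewrite /central_len /= big_ord0.
have hc : (0 < #|'I_(size u)|)%N by rewrite card_ord.
have [i0 Hi0] := @eq_bigmax _ (fun i : 'I_(size u) => runlen u i) hc.
have hhas : has (fun i => central_len u <= runlen u i)%N (iota 0 (size u)).
  apply/hasP; exists (val i0); first by rewrite mem_iota /= ltn_ord.
  by rewrite /central_len Hi0.
have hf := hhas; rewrite has_find size_iota in hf.
have := nth_find 0 hhas; rewrite nth_iota // add0n -/(central_pos u) => hge.
split; first by apply: take_find_ones.
apply: leq_trans hge _; rewrite /runlen; exact: find_size.
Qed.

Lemma filter_pred1_nseq (T : eqType) (x : T) s : filter (pred1 x) s = nseq (count (pred1 x) s) x.
Proof. by elim: s => //= y s IH; case: eqP => [->|] /=; rewrite IH. Qed.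

Lemma sumn_shape_add k nu : sumn (shape_add k nu) = (k + sumn nu)%N.
Proof. by case: nu => [|a r] /=; lia. Qed.

Lemma nonrow1_bound n K mu T : (3 * K <= n)%N -> sumn mu = (4 * K)%N ->
  is_std_tableau (shape_add (n - 3 * K) mu) T ->
  (count (fun j => row_of T j != 1%N) (iota 1 (n + K)) <= 4 * K)%N.
Proof.
move=> hn hmu [Hsz Hperm _ _].
rewrite sumn_shape_add hmu in Hperm.
have E : (n - 3 * K + 4 * K = n + K)%N by lia.
rewrite E in Hperm.
case: T Hsz Hperm => [|r0 Tr]; first by case: mu {hmu}.
move=> Hsz Hperm.
have hr0 : (n - 3 * K <= size r0)%N.
  move: Hsz; case: mu {hmu} => [|a r] /= [E2]; [by rewrite E2 | by move=> _; rewrite E2 leq_addl].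
have -> : count (fun j => row_of (r0 :: Tr) j != 1%N) (iota 1 (n + K)) =
          count (predC (mem r0)) (iota 1 (n + K)).
  by apply: eq_count => j; rewrite /row_of /=; case: (j \in r0).
have hc : (size r0 <= count (mem r0) (iota 1 (n + K)))%N.
  rewrite -(seq.permP Hperm) /= count_cat.
  have -> : count (mem r0) r0 = size r0 by apply/eqP; rewrite -all_count; apply/allP.
  exact: leq_addr.
have := count_predC (mem r0) (iota 1 (n + K)); rewrite size_iota.
move: hc hr0; move: (count (mem r0) _) (count (predC (mem r0)) _) (size r0) => a b c; lia.
Qed.

Lemma elem_bound (x : word) : x != [::] ->
  (size x * (x != [:: 1%N]) + 2 <= 2 * size x + count p1 x)%N.
Proof.
case: x => [|a [|b s]] // _.
  have [->|ha] := eqVneq a 1%N; first by rewrite eqxx.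
  have -> : ([:: a] != [:: 1%N]) by rewrite eqseq_cons andbT.
  by rewrite /= /p1 ha.
rewrite /=; case: (_ != _); rewrite /=; lia.
Qed.

Lemma Dsum_filter (ms : seq word) : all (fun x => x != [::]) ms ->
  (Dsum (filter (predC1 [:: 1%N]) ms) + 2 * size ms <= 2 * Dsum ms + count p1 (flatten ms))%N.
Proof.
elim: ms => //= x ms IH /andP [hx hall]; have := IH hall; have := elem_bound hx.
rewrite /Dsum count_cat.
have -> : sumn (map size (filter (predC1 [:: 1%N]) (x :: ms))) =
   (size x * (x != [:: 1%N]) + sumn (map size (filter (predC1 [:: 1%N]) ms)))%N.
  by rewrite /=; case: (x != [:: 1%N]) => /=; rewrite ?muln1 ?muln0.
rewrite /=.
set A := sumn (map size (filter _ ms)). set B := sumn (map size ms).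
set C := count p1 (flatten ms). set X := (size x * _)%N. set Y := count p1 x.
set Z := size x. set W := size ms.
lia.
Qed.

Local Open Scope ring_scope.
Lemma fact_add (F : fieldType) s c :
  (((s + c)`!)%:R : F) = (s`!)%:R * \prod_(i < c) ((s + i).+1)%:R.
Proof.
elim: c => [|c IH]; first by rewrite addn0 big_ord0 GRing.mulr1.
rewrite addnS factS natrM IH big_ord_recr /=; ring.
Qed.


End Part3.
Import Part3.
Local Open Scope ring_scope.
Unset Implicit Arguments.

Theorem lemma4p23 (F : fieldType) (charF0 : [pchar F] =i pred0)
  (K : nat) (mu : seq nat) (mu_part : is_partition mu)
  (mu_size : sumn mu = (4 * K)%N) :
  exists MK : nat, (3 * K <= MK)%N /\
    forall n : nat, (MK <= n)%N ->
    forall T : seq (seq nat), is_std_tableau (shape_add (n - 3 * K) mu) T ->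
    forall O : seq (seq nat), ordered_partition n (n + K) O ->
    forall u : word, Coef F u (Psym (mons T O)) != 0 ->
    exists p : {poly F}, forall s : nat,
      Coef F (ext s u) (Psym (mons T O ++ nseq s [:: 1%N]))
        = p.[s%:R] * (s`!)%:R.
Proof.
exists (3 * K + (4 * K).+1 * (6 * K).+1)%N; split; first exact: leq_addr.
move=> n hn T HT O HO u Hu.
have hn3 : (3 * K <= n)%N by apply: leq_trans hn; apply: leq_addr.
set ms := mons T O.
have uin : u \in Psym ms.
  apply/negPn/negP => /count_memPn H; move: Hu; rewrite /Coef.
  by rewrite H eqxx.
have Hpu := mem_Psym_perm uin.
case: HO => HOsz HOne HOperm.
have Hfl : flatten ms = map (row_of T) (flatten O) by rewrite /ms /mons map_flatten.
have Hperm2 : perm_eq u (map (row_of T) (iota 1 (n + K))).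
  by apply: perm_trans Hpu _; rewrite Hfl; apply: perm_map.
have szu : size u = (n + K)%N by rewrite (perm_size Hperm2) size_map size_iota.
have cu : (count p1 u <= 4 * K)%N.
  rewrite (seq.permP Hperm2) count_map.
  exact: (nonrow1_bound hn3 mu_size HT).
have Dms : Dsum ms = (n + K)%N.
  by rewrite -szu (perm_size Hpu) size_flatten.
have szms : size ms = n by rewrite size_map.
have hall : all (fun x => x != [::]) ms.
  apply/allP => x /mapP [A AO ->]; rewrite /SubT.
  by move/allP: HOne => /(_ A AO); case: A {AO}.
set ms0 := filter (predC1 [:: 1%N]) ms.
set c := count (pred1 [:: 1%N]) ms.
have D0 : (Dsum ms0 <= 6 * K)%N.
  have := Dsum_filter hall; rewrite -/ms0 szms Dms.
  have -> : count p1 (flatten ms) = count p1 u by apply/seq.permP; rewrite perm_sym.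
  move: cu; move: (Dsum ms0) (count p1 u) => a b; lia.
have HL : (6 * K < central_len u)%N.
  rewrite ltnNge; apply/negP => hL.
  have := runlen_bound (runlen_le_central u); rewrite szu.
  have := runlen_le_central u 0.
  have hm : (count p1 u * (central_len u).+1 <= 4 * K * (6 * K).+1)%N.
    by apply: leq_mul.
  move: hn hm hL; move: (count p1 u * (central_len u).+1)%N (central_len u) (runlen u 0) => a b d.
  nia.
have [Htake HszL] := central_split (leq_ltn_trans (leq0n _) HL).
have Hext0 : forall s, ext s u = take (central_pos u) u ++ nseq s 1%N ++ drop (central_pos u) u.
  by [].
set L := central_len u in HL Htake HszL.
set pos := central_pos u in Htake HszL Hext0.
set g := take pos u. set h := drop L (drop pos u).
have Hdec : u = g ++ nseq L 1%N ++ h by rewrite -Htake !cat_take_drop.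
have Hext : forall s, ext s u = g ++ nseq (s + L) 1%N ++ h.
  by move=> s; rewrite Hext0 nseqD -catA -Htake cat_take_drop.
have Hms : perm_eq ms (ms0 ++ nseq c [:: 1%N]).
  rewrite perm_sym -filter_pred1_nseq.
  have := permEl (perm_filterC (predC1 [:: 1%N]) ms).
  by rewrite (@eq_filter _ (predC (predC1 [:: 1%N])) (pred1 [:: 1%N])) // => x; rewrite /= negbK.
have DmsE : Dsum ms = (Dsum ms0 + c)%N.
  rewrite /Dsum (perm_sumn (perm_map size Hms)) map_cat sumn_cat map_nseq sumn_nseq.
  by rewrite mul1n.
have [P HP] := @core F charF0 h _ ms0 g (ltnSn _).
exists ((\prod_(i < c) ('X + (i.+1)%:R%:P)) * (P \Po ('X + (L%:R)%:P))) => s.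
have Hperm3 : perm_eq (ms ++ nseq s [:: 1%N]) (ms0 ++ nseq (c + s) [:: 1%N]).
  by rewrite nseqD catA; apply: perm_cat Hms (perm_refl _).
rewrite /Coef count_Psym Hext (Cnt_perm _ Hperm3).
have szu2 : size u = (size g + L + size h)%N by rewrite {1}Hdec !size_cat size_nseq addnA.
have Hjj : jj ms0 g h (s + L) = (c + s)%N.
  rewrite /jj; move: szu2 szu Dms DmsE; rewrite -/ms.
  move: (size g) (size h) (size u) (Dsum ms) (Dsum ms0) => a b d e f; lia.
have := NfE charF0 ms0 g h (s + L); rewrite Hjj => ->.
rewrite HP; last exact: leq_ltn_trans D0 (ltn_addl s HL).
rewrite [(c + s)%N]addnC fact_add hornerM horner_prod horner_comp hornerD hornerX hornerC.
have Hprod : \prod_(i < c) ((s + i).+1)%:R = \prod_(i < c) ('X + i.+1%:R%:P).[s%:R] :> F.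
  by apply: eq_bigr => i _; rewrite hornerD hornerX hornerC -natrD addnS.
rewrite Hprod natrD; ring.
Qed.
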